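(* Let $G=(V,E)$ be a graph with maximum degree $\Delta\ge 1$, let $I_i\subseteq V$ be an independent set, let $A_i = V\setminus \hat\Gamma(I_i)$, and write $\deg_i,\Gamma_i,\hat\Gamma_i$ for degree, neighborhood and closed neighborhood in the induced subgraph $G(A_i)$. Perform one stage: each $v\in A_i$ independently selects itself with probability $\frac{1}{\Delta+1}$, and $I_{i+1} = I_i\cup\{v\in A_i : v \text{ is the only vertex of } \hat\Gamma_i(v) \text{ that selected itself}\}$; let $A_{i+1}=V\setminus\hat\Gamma(I_{i+1})$. Let $S\subseteq A_i$ be such that $\operatorname{dist}_G(u,u')\ge 5$ for all distinct $u,u'\in S$ and $\deg_i(u)\ge \Delta/2$ for all $u\in S$. Then $\Pr[S\subseteq A_{i+1}] \le p^{|S|}$, where $p = 1-(1-e^{-1/2})e^{-1}\approx 0.85$.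
   Context: For $U\subseteq V$, $\hat\Gamma(U)$ denotes $U$ together with all neighbors of vertices in $U$; for a vertex $v$, $\hat\Gamma(v)=\Gamma(v)\cup\{v\}$. $\operatorname{dist}_G$ is shortest-path distance in $G$. $G(U)$ denotes the subgraph induced by $U$. *)

(* Defs.v *)
From mathcomp Require Import all_boot.
From Stdlib Require Import Reals.
Set Implicit Arguments. Unset Strict Implicit. Unset Printing Implicit Defensive.

Section Graph.
Variable T : finType.
Variable e : rel T.

Definition simple_graph : Prop := symmetric e /\ irreflexive e.

Definition nbhd (v : T) : {set T} := [set u | e v u].
Definition deg (v : T) : nat := #|nbhd v|.
Definition maxdeg : nat := \max_(v : T) deg v.

Definition cnbhd (U : {set T}) : {set T} :=
  [set v | (v \in U) || [exists u in U, e u v]].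

Definition independent (I : {set T}) : Prop :=
  forall u v, u \in I -> v \in I -> ~~ e u v.

Definition deg_in (A : {set T}) (v : T) : nat := #|[set u in A | e v u]|.

Fixpoint ball (k : nat) (u : T) : {set T} :=
  match k with
  | 0 => [set u]
  | k'.+1 => cnbhd (ball k' u)
  end.

(* dist_G(u,u') >= d  (d >= 1); infinite distance allowed *)
Definition dist_ge (d : nat) (u u' : T) : Prop := u' \notin ball d.-1 u.

Definition avail (I : {set T}) : {set T} := ~: cnbhd I.

(* one stage, given the set X ⊆ A_i of vertices that selected themselves:
   v ∈ A_i joins if v ∈ X and no vertex of Γ_i(v) (neighbours inside A_i) is in X *)
Definition next_indep (I X : {set T}) : {set T} :=
  I :|: [set v in avail I | (v \in X) &&
                            [forall u in avail I, e v u ==> (u \notin X)]].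

(* probability (product measure, each v ∈ A selects w.p. q) of the event P *)
Definition prob_sel (A : {set T}) (q : R) (P : {set T} -> bool) : R :=
  \big[Rplus/0%R]_(X : {set T} | (X \subset A) && P X)
     (q ^ #|X| * (1 - q) ^ (#|A| - #|X|))%R.

End Graph.

Definition p_const : R := (1 - (1 - exp (- / 2)) * exp (-1))%R.

(* Main.v *)
Require Import Defs.
From HB Require Import structures.
From mathcomp Require Import all_boot.
From Stdlib Require Import Reals Lra.

HB.instance Definition _ := Monoid.isComLaw.Build R 0%R Rplus
  (fun a b c => esym (Rplus_assoc a b c)) Rplus_comm Rplus_0_l.

Lemma sumR_mull (I : Type) (r : seq I) (P : pred I) (c : R) (F : I -> R) :
  \big[Rplus/0%R]_(i <- r | P i) (c * F i)%R = (c * \big[Rplus/0%R]_(i <- r | P i) F i)%R.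
Proof.
apply: (big_rec2 (fun x y => x = c * y)%R); first by rewrite Rmult_0_r.
by move=> i x y _ ->; rewrite Rmult_plus_distr_l.
Qed.

Lemma sumR_ge0 (I : Type) (r : seq I) (P : pred I) (F : I -> R) :
  (forall i, P i -> 0 <= F i)%R -> (0 <= \big[Rplus/0%R]_(i <- r | P i) F i)%R.
Proof.
move=> H; apply: (big_rec (fun x => 0 <= x)%R); first lra.
move=> i x Pi Hx; have := H i Pi; lra.
Qed.
Lemma sub_U1 (T : finType) (A X : {set T}) (a : T) :
  a \notin X -> (X \subset a |: A) = (X \subset A).
Proof.
move=> aX; apply/subsetP/subsetP => H x xX.
  have := H x xX; rewrite in_setU1; case/orP=> // /eqP ex; by rewrite -ex xX in aX.
by rewrite in_setU1 H ?orbT.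
Qed.

Lemma split_mu (T : finType) (q : R) (A : {set T}) (a : T) (P : {set T} -> bool) :
  a \notin A ->
  prob_sel (a |: A) q P = (q * prob_sel A q (fun X => P (a |: X)) + (1 - q) * prob_sel A q P)%R.
Proof.
move=> aA; rewrite /prob_sel (@bigID R 0%R Rplus _ _ (fun X : {set T} => a \in X)) /=.
have cA : #|a |: A| = (#|A|).+1 by rewrite cardsU1 aA.
congr (_ + _)%R.
- rewrite -sumR_mull.
  rewrite (@reindex_onto R Rplus 0%R _ _ (fun Y => a |: Y) (fun X => X :\ a)) /=; last first.
    move=> X /andP[_ aX]; by rewrite setD1K.
  apply: eq_big.
    move=> X; rewrite setU11 andbT.
    case jA: (X \subset A).
      have aX : a \notin X by apply: contra aA; apply: (subsetP jA).
      by rewrite setU1K // eqxx andbT setUS.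
    case: eqP => [eX|]; last by rewrite andbF.
    have aX : a \notin X by rewrite -eX setD11.
    by rewrite subUset sub1set setU11 /= (@sub_U1 _ A X a aX) jA.
  move=> X /andP[/andP[/andP[_ _] _] /eqP eX].
  have aX : a \notin X by rewrite -eX setD11.
  rewrite cardsU1 aX add1n cA subSS /=; ring.
- rewrite -sumR_mull; apply: eq_big.
    move=> X; case aX: (a \in X); rewrite ?andbF ?andbT //=.
      case XA: (X \subset A) => //; by rewrite (subsetP XA _ aX) in aA.
    by rewrite (@sub_U1 _ A X a) ?aX.
  move=> X /andP[/andP[XA _] aX].
  rewrite (@sub_U1 _ A X a aX) in XA.
  rewrite cA subSn ?subset_leq_card //=; ring.
Qed.
Lemma mu_set0 (T : finType) (q : R) (P : {set T} -> bool) :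
  prob_sel set0 q P = (if P set0 then 1 else 0)%R.
Proof.
rewrite /prob_sel; case P0: (P set0).
  rewrite (@eq_bigl _ _ _ _ _ _ (pred1 set0)); last first.
    move=> X /=; rewrite subset0; case: eqP => // ->; by rewrite P0.
  by rewrite big_pred1_eq /= cards0 /=; ring.
rewrite (@eq_bigl _ _ _ _ _ _ pred0) ?big_pred0_eq //.
move=> X /=; rewrite subset0; case: eqP => // ->; by rewrite P0.
Qed.

Lemma set_ind' (T : finType) (Pr : {set T} -> Prop) :
  Pr set0 -> (forall (a : T) (A : {set T}), a \notin A -> Pr A -> Pr (a |: A)) -> forall A, Pr A.
Proof.
move=> H0 HS A; move: {2}#|A| (erefl #|A|) => n; elim: n A => [|n IH] A cA.
  by move/eqP: cA; rewrite cards_eq0 => /eqP ->.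
case: (set_0Vmem A) => [A0|[a aA]]; first by rewrite A0 cards0 in cA.
rewrite -(setD1K aA); apply: HS; first by rewrite setD11.
apply: IH; by rewrite (cardsD1 a A) aA add1n in cA; case: cA.
Qed.

Lemma mu_false (T : finType) (q : R) (A : {set T}) (P : {set T} -> bool) :
  (forall X : {set T}, P X = false) -> prob_sel A q P = 0%R.
Proof.
move=> H; rewrite /prob_sel (@eq_bigl _ _ _ _ _ _ pred0) ?big_pred0_eq //.
by move=> X /=; rewrite H andbF.
Qed.

Lemma mu_ext (T : finType) (q : R) (A : {set T}) (P Q : {set T} -> bool) :
  (forall X : {set T}, X \subset A -> P X = Q X) -> prob_sel A q P = prob_sel A q Q.
Proof.
move=> H; rewrite /prob_sel; apply: eq_bigl => X.
case XA: (X \subset A) => //=; exact: H.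
Qed.

Lemma mu_avoid (T : finType) (q : R) (N A : {set T}) :
  prob_sel A q (fun X => X :&: N == set0) = ((1 - q) ^ #|A :&: N|)%R.
Proof.
elim/set_ind': A => [|a A aA IH].
  rewrite mu_set0. rewrite (_ : set0 :&: N = set0); last by apply/setP=> x; rewrite !inE. by rewrite eqxx cards0.
rewrite split_mu // IH setIUl.
case aN: (a \in N).
  rewrite mu_false ?Rmult_0_r ?Rplus_0_l.
    rewrite (_ : [set a] :&: N = [set a]); last by apply/setIidPl; rewrite sub1set.
    rewrite cardsU1 in_setI (negbTE aA) add1n /=; ring.
  by move=> X; apply/negbTE/set0Pn; exists a; rewrite !inE eqxx aN.
rewrite (_ : [set a] :&: N = set0); last first.
  by apply/setP => x; rewrite !inE; case: eqP => // ->; rewrite aN.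
rewrite set0U (@mu_ext _ _ _ _ (fun X => X :&: N == set0)) ?IH; first ring.
move=> X _; rewrite setIUl (_ : [set a] :&: N = set0) ?set0U //.
by apply/setP => x; rewrite !inE; case: eqP => // ->; rewrite aN.
Qed.

Lemma mu_true (T : finType) (q : R) (A : {set T}) :
  prob_sel A q (fun X => true) = 1%R.
Proof.
rewrite (@mu_ext _ _ _ _ (fun X => X :&: set0 == set0)) ?mu_avoid ?setI0 ?cards0 //.
by move=> X _; rewrite setI0 eqxx.
Qed.

Lemma mu_split (T : finType) (q : R) (A : {set T}) (P Q : {set T} -> bool) :
  prob_sel A q Q = (prob_sel A q (fun X => Q X && P X) + prob_sel A q (fun X => Q X && ~~ P X))%R.
Proof.
rewrite /prob_sel (@bigID R 0%R Rplus _ _ P) /=.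
by congr (_ + _)%R; apply: eq_bigl => X; rewrite andbA.
Qed.

Lemma mu_ge0 (T : finType) (q : R) (A : {set T}) (P : {set T} -> bool) :
  (0 <= q <= 1)%R -> (0 <= prob_sel A q P)%R.
Proof.
move=> Hq; apply: sumR_ge0 => X _; apply: Rmult_le_pos; apply: pow_le; lra.
Qed.

Lemma mu_mono (T : finType) (q : R) (A : {set T}) (P Q : {set T} -> bool) :
  (0 <= q <= 1)%R -> (forall X : {set T}, P X -> Q X) -> (prob_sel A q P <= prob_sel A q Q)%R.
Proof.
move=> Hq H; rewrite (@mu_split _ _ _ P Q).
rewrite (@mu_ext _ _ _ (fun X => Q X && P X) P).
  have := @mu_ge0 _ q A (fun X => Q X && ~~ P X) Hq; lra.
by move=> X _; case PX: (P X); rewrite ?andbT ?andbF // H.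
Qed.

Lemma mu_compl (T : finType) (q : R) (A : {set T}) (P : {set T} -> bool) :
  prob_sel A q (fun X => ~~ P X) = (1 - prob_sel A q P)%R.
Proof.
have E := @mu_split _ q A P (fun _ => true).
rewrite (@mu_true _ q A) /= in E.
rewrite (_ : prob_sel A q P = prob_sel A q (fun X => P X)) //; lra.
Qed.
Lemma loc_in (T : finType) (D : {set T}) (P : {set T} -> bool) (a : T) :
  (forall X : {set T}, P X = P (X :&: D)) -> a \in D ->
  forall X : {set T}, P (a |: X) = P (a |: (X :&: D)).
Proof.
move=> HP aD X; rewrite HP [in RHS]HP; congr P.
apply/setP=> x; rewrite !inE; case: eqP => [->|_] //=; by rewrite -andbA andbb.
Qed.

Lemma loc_out (T : finType) (D : {set T}) (P : {set T} -> bool) (a : T) :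
  (forall X : {set T}, P X = P (X :&: D)) -> a \notin D ->
  forall X : {set T}, P (a |: X) = P X.
Proof.
move=> HP aD X; rewrite HP [in RHS]HP; congr P.
apply/setP=> x; rewrite !inE; case: eqP => [->|_] //=; by rewrite (negbTE aD) andbF.
Qed.

Lemma mu_indep (T : finType) (q : R) (D A : {set T}) (P Q : {set T} -> bool) :
  (forall X : {set T}, P X = P (X :&: D)) -> (forall X : {set T}, Q X = Q (X :&: ~: D)) ->
  prob_sel A q (fun X => P X && Q X) = (prob_sel A q P * prob_sel A q Q)%R.
Proof.
elim/set_ind': A P Q => [|a A aA IH] P Q HP HQ.
  by rewrite !mu_set0; case: (P set0); case: (Q set0) => /=; ring.
rewrite !split_mu //.
case aD: (a \in D).
  have HQa : forall X : {set T}, Q (a |: X) = Q X.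
    by apply: (@loc_out _ _ _ _ HQ); rewrite inE aD.
  have HPa : forall X : {set T}, P (a |: X) = P (a |: (X :&: D)).
    exact: (@loc_in _ _ _ _ HP aD).
  rewrite (@mu_ext _ _ _ _ (fun X => P (a |: X) && Q X)); last by move=> X _; rewrite HQa.
  rewrite (@mu_ext _ _ _ (fun X => Q (a |: X)) Q); last by move=> X _; rewrite HQa.
  rewrite (IH (fun X => P (a |: X)) Q) // (IH P Q) //; ring.
have HPa : forall X : {set T}, P (a |: X) = P X.
  by apply: (@loc_out _ _ _ _ HP); rewrite aD.
have aD' : a \in ~: D by rewrite inE aD.
have HQa : forall X : {set T}, Q (a |: X) = Q (a |: (X :&: ~: D)).
  exact: (@loc_in _ _ _ _ HQ aD').
rewrite (@mu_ext _ _ _ _ (fun X => P X && Q (a |: X))); last by move=> X _; rewrite HPa.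
rewrite (@mu_ext _ _ _ (fun X => P (a |: X)) P); last by move=> X _; rewrite HPa.
rewrite (IH P (fun X => Q (a |: X))) // (IH P Q) //; ring.
Qed.
Lemma pow_le_dec (x : R) (m n : nat) : (0 <= x <= 1)%R -> (m <= n)%N -> (x ^ n <= x ^ m)%R.
Proof.
move=> Hx mn; rewrite -(subnK mn) pow_add.
have h1 : (x ^ (n - m) <= 1)%R by rewrite -(pow1 (n - m)); apply: pow_incr; lra.
have h2 : (0 <= x ^ (n - m))%R by apply: pow_le; lra.
have h3 : (0 <= x ^ m)%R by apply: pow_le; lra.
nra.
Qed.

Definition joins (T : finType) (e : rel T) (X : {set T}) (w : T) : bool :=
  (w \in X) && [forall v, e w v ==> (v \notin X)].
Arguments joins {T} e X w.

Lemma mu_first (T : finType) (e : rel T) (q : R) (Dl : nat) (W A : {set T}) :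
  (0 <= q <= 1)%R -> irreflexive e -> W \subset A ->
  (forall w, w \in W -> #|[set v in A | e w v]| <= Dl)%N ->
  ((1 - (1 - q) ^ #|W|) * (1 - q) ^ Dl <= prob_sel A q (fun X => [exists w in W, joins e X w]))%R.
Proof.
move=> Hq irr; elim/set_ind': W A => [|w W wW IH] A WA Hdeg.
  rewrite cards0 /= Rminus_diag Rmult_0_l; exact: mu_ge0.
have wA : w \in A by apply: (subsetP WA); rewrite setU11.
have wA' : w \notin A :\ w by rewrite setD11.
have WA' : W \subset A :\ w.
  apply/subsetP=> x xW; rewrite in_setD1 (subsetP WA) ?andbT; last by rewrite in_setU1 xW orbT.
  by apply: contraNneq wW => <-.
rewrite -(setD1K wA) split_mu //.
set N := [set v | e w v].
have H1 : ((1 - q) ^ Dl <= prob_sel (A :\ w) q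
     (fun X => [exists w0 in w |: W, joins e (w |: X) w0]))%R.
  apply: Rle_trans (@mu_mono _ q _ (fun X => X :&: N == set0) _ Hq _).
    rewrite mu_avoid; apply: pow_le_dec; first lra.
    apply: leq_trans (Hdeg w (setU11 _ _)).
    apply: subset_leq_card; apply/subsetP => x; rewrite !inE; by case/andP=> /andP[_ ->] ->.
  move=> X /eqP XN; apply/existsP; exists w; rewrite setU11 /joins in_setU1 eqxx /=.
  apply/forallP=> v; apply/implyP => ewv; rewrite in_setU1 negb_or.
  apply/andP; split; first by apply: contraTneq ewv => ->; rewrite irr.
  apply/negP => vX; have : v \in X :&: N by rewrite !inE vX ewv.
  by rewrite XN inE.
have H2 : ((1 - (1 - q) ^ #|W|) * (1 - q) ^ Dl <= prob_sel (A :\ w) q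
     (fun X => [exists w0 in w |: W, joins e X w0]))%R.
  apply: Rle_trans (IH _ WA' _) (@mu_mono _ q _ _ _ Hq _).
    move=> x xW; apply: leq_trans (Hdeg x _); last by rewrite in_setU1 xW orbT.
    apply: subset_leq_card; apply/subsetP => y; rewrite !inE; by case/andP=> /andP[_ ->] ->.
  move=> X /existsP[x /andP[xW jx]]; apply/existsP; exists x; by rewrite in_setU1 xW orbT.
rewrite cardsU1 wW add1n /=.
have h0 : (0 <= (1 - q) ^ Dl)%R by apply: pow_le; lra.
have h0' : (0 <= (1 - q) ^ #|W|)%R by apply: pow_le; lra.
nra.
Qed.
Lemma ballS (T : finType) (e : rel T) (n : nat) (u x : T) :
  (x \in ball e n.+1 u) = (x \in ball e n u) || [exists y in ball e n u, e y x].
Proof. by rewrite /= /cnbhd inE. Qed.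

Lemma ball0 (T : finType) (e : rel T) (u x : T) : (x \in ball e 0 u) = (x == u).
Proof. by rewrite /= inE. Qed.

Lemma ball_sub (T : finType) (e : rel T) (n : nat) (u x : T) :
  x \in ball e n u -> x \in ball e n.+1 u.
Proof. by move=> h; rewrite ballS h. Qed.

Lemma ball_trans (T : finType) (e : rel T) (m n : nat) (x y z : T) :
  y \in ball e m x -> z \in ball e n y -> z \in ball e (m + n) x.
Proof.
move=> hy; elim: n z => [|n IH] z.
  by rewrite ball0 addn0 => /eqP ->.
rewrite ballS addnS => /orP[/IH h|/existsP[y' /andP[y'b ey'z]]]; first exact: ball_sub.
rewrite ballS; apply/orP; right; apply/existsP; exists y'; by rewrite IH.
Qed.

Lemma ball_sym (T : finType) (e : rel T) (n : nat) (x y : T) :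
  symmetric e -> y \in ball e n x -> x \in ball e n y.
Proof.
move=> sym; elim: n y => [|n IH] y.
  by rewrite !ball0 eq_sym.
rewrite ballS => /orP[/IH h|/existsP[y' /andP[y'b ey'y]]]; first exact: ball_sub.
have h1 : y' \in ball e 1 y by rewrite ballS ball0; apply/orP; right; apply/existsP; exists y; rewrite ball0 eqxx sym.
have := @ball_trans _ e 1 n y y' x h1 (IH _ y'b); by rewrite add1n.
Qed.

Lemma ball_disj (T : finType) (e : rel T) (u u' z : T) :
  symmetric e -> u' \notin ball e 4 u -> z \in ball e 2 u -> z \notin ball e 2 u'.
Proof.
move=> sym hf zu; apply/negP => zu'.
have := @ball_trans _ e 2 2 u z u' zu (@ball_sym _ e 2 u' z sym zu'); by rewrite (negbTE hf).
Qed.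
Lemma ball1E (T : finType) (e : rel T) (u w : T) :
  (w \in ball e 1 u) = (w == u) || e u w.
Proof.
rewrite ballS ball0; congr orb; apply/existsP/idP => [[y /andP[]]|h].
  by rewrite ball0 => /eqP ->.
by exists u; rewrite ball0 eqxx.
Qed.

Definition killed (T : finType) (e : rel T) (u : T) (X : {set T}) : bool :=
  [exists w, ((w == u) || e w u) && joins e X w].
Arguments killed {T} e u X.

Lemma joins_loc (T : finType) (e : rel T) (D X : {set T}) (w : T) :
  w \in D -> (forall v, e w v -> v \in D) -> joins e X w = joins e (X :&: D) w.
Proof.
move=> wD H; rewrite /joins inE wD andbT; congr andb.
apply: eq_forallb => v; case ewv: (e w v) => //=; by rewrite inE (H v ewv) andbT.
Qed.

Lemma killed_loc (T : finType) (e : rel T) (u : T) (X : {set T}) :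
  symmetric e -> killed e u X = killed e u (X :&: ball e 2 u).
Proof.
move=> sym; apply: eq_existsb => w; case hw: ((w == u) || e w u) => //=.
have w1 : w \in ball e 1 u by rewrite ball1E sym.
apply: joins_loc; first exact: (@ball_sub _ e 1 u w w1).
move=> v ewv; change (v \in ball e 2 u); rewrite ballS; apply/orP; right; apply/existsP; exists w; by rewrite w1.
Qed.
Lemma joinsJ (T : finType) (e : rel T) (I X : {set T}) (v : T) :
  X \subset avail e I ->
  (v \in [set v in avail e I | (v \in X) && [forall u in avail e I, e v u ==> (u \notin X)]])
  = joins e X v.
Proof.
move=> XA; rewrite inE /joins; case vX: (v \in X) => /=; last by rewrite andbF.
rewrite (subsetP XA v vX) /=; apply: eq_forallb => w.
case wA: (w \in avail e I) => //=.
have wX: w \notin X by apply/negP => wX; rewrite (subsetP XA w wX) in wA.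
by rewrite wX implybT.
Qed.

Lemma event_eq (T : finType) (e : rel T) (I X : {set T}) (u : T) :
  X \subset avail e I -> u \in avail e I ->
  (u \in avail e (next_indep e I X)) = ~~ killed e u X.
Proof.
move=> XA uA; rewrite /avail inE; congr negb.
have uI : u \notin cnbhd e I by rewrite /avail inE in uA.
apply/idP/idP.
  rewrite /cnbhd inE => /orP[|/existsP[z /andP[zN ezu]]].
    rewrite /next_indep in_setU => /orP[uI'|uJ].
      by rewrite /cnbhd inE uI' in uI.
    apply/existsP; exists u; by rewrite eqxx -(@joinsJ _ e I X _ XA).
  move: zN; rewrite /next_indep in_setU => /orP[zI|zJ].
    rewrite /cnbhd inE in uI; case/norP: uI => _ /existsPn /(_ z).
    by rewrite zI ezu.
  apply/existsP; exists z; by rewrite ezu orbT -(@joinsJ _ e I X _ XA).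
case/existsP => w /andP[/orP[/eqP ->|ewu] jw]; rewrite /cnbhd inE.
  by rewrite /next_indep in_setU (@joinsJ _ e I X _ XA) jw orbT.
apply/orP; right; apply/existsP; exists w.
by rewrite ewu andbT /next_indep in_setU (@joinsJ _ e I X _ XA) jw orbT.
Qed.
Lemma exp_le' (x y : R) : (x <= y)%R -> (exp x <= exp y)%R.
Proof.
move=> h; case: (Rle_lt_or_eq_dec _ _ h) => [lt|->]; last lra.
left; exact: exp_increasing.
Qed.

Lemma exp_pow (x : R) (n : nat) : (exp x ^ n = exp (INR n * x))%R.
Proof.
elim: n => [|n IH]; first by rewrite /= Rmult_0_l exp_0.
change (exp x ^ n.+1)%R with (exp x * exp x ^ n)%R.
rewrite IH -exp_plus S_INR; congr exp; ring.
Qed.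

Lemma real_bound (D d : nat) : (1 <= D)%N -> (INR D / 2 <= INR d)%R ->
  ((1 - exp (- / 2)) * exp (-1) <=
   (1 - (1 - / (INR D + 1)) ^ d.+1) * (1 - / (INR D + 1)) ^ D)%R.
Proof.
move=> /leP HD Hd.
have HD' : (1 <= INR D)%R by apply: (le_INR 1).
set q := (/ (INR D + 1))%R.
have qs : (q * (INR D + 1) = 1)%R by rewrite /q; field; lra.
have q0 : (0 < q)%R by rewrite /q; apply: Rinv_0_lt_compat; lra.
have q1 : (q < 1)%R by nra.
have ha : (exp (-1) <= (1 - q) ^ D)%R.
  have h1 : (exp (- / INR D) <= 1 - q)%R.
    rewrite exp_Ropp.
    have e1 := exp_ineq1_le (/ INR D).
    have hi : (0 < / INR D)%R by apply: Rinv_0_lt_compat; lra.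
    apply: Rle_trans (Rinv_le_contravar _ _ _ e1) _; first lra.
    right; rewrite /q; field; lra.
  have : (exp (-1) = exp (- / INR D) ^ D)%R by rewrite exp_pow; congr exp; field; lra.
  move=> ->; apply: pow_incr; split; last exact: h1.
  left; exact: exp_pos.
have hb : ((1 - q) ^ d.+1 <= exp (- / 2))%R.
  apply: Rle_trans (_ : exp (- q) ^ d.+1 <= _)%R.
    apply: pow_incr; split; first lra.
    have := exp_ineq1_le (- q); lra.
  rewrite exp_pow; apply: exp_le'; rewrite S_INR.
  have : (0 <= 2 * (INR d + 1) - (INR D + 1))%R by lra.
  nra.
have e0 : (0 < exp (-1))%R by apply: exp_pos.
have e2 : (exp (- / 2) <= 1)%R.
  rewrite -exp_0; apply: exp_le'; lra.
have p0 : (0 <= (1 - q) ^ d.+1)%R by apply: pow_le; lra.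
nra.
Qed.
Lemma forall_U1 (T : finType) (u : T) (S : {set T}) (P : pred T) :
  [forall x in u |: S, P x] = P u && [forall x in S, P x].
Proof.
apply/forallP/andP => [H|[Pu /forallP H] x].
  split; first by have := H u; rewrite setU11.
  by apply/forallP => x; apply/implyP => xS; have := H x; rewrite in_setU1 xS orbT.
by apply/implyP; rewrite in_setU1 => /orP[/eqP ->|xS] //; exact: (implyP (H x)).
Qed.

Lemma one_bound (T : finType) (e : rel T) (A : {set T}) (u : T) :
  symmetric e -> irreflexive e -> (1 <= maxdeg e)%N -> u \in A ->
  (INR (maxdeg e) / 2 <= INR (deg_in e A u))%R ->
  (prob_sel A (/ (INR (maxdeg e) + 1)) (fun X => ~~ killed e u X) <= p_const)%R.
Proof.
move=> sym irr HD uA hd.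
set q := (/ (INR (maxdeg e) + 1))%R.
have Hq : (0 <= q <= 1)%R.
  have : (1 <= INR (maxdeg e))%R by apply: (le_INR 1); apply/leP.
  rewrite /q => h; split; first by left; apply: Rinv_0_lt_compat; lra.
  rewrite -Rinv_1; apply: Rinv_le_contravar; lra.
rewrite mu_compl.
set W := [set w in A | (w == u) || e w u].
have cW : #|W| = (deg_in e A u).+1.
  rewrite /deg_in (_ : W = u |: [set u0 in A | e u u0]).
    by rewrite cardsU1 inE irr andbF add1n.
  apply/setP => w; rewrite in_setU1 !inE; case: eqP => [->|_] /=; first by rewrite uA.
  by rewrite (sym w u).
have h1 := @mu_first _ e q (maxdeg e) W A Hq irr.
have h2 : ((1 - (1 - q) ^ #|W|) * (1 - q) ^ maxdeg e <=
           prob_sel A q (fun X => [exists w in W, joins e X w]))%R.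
  apply: h1; first by apply/subsetP => w; rewrite inE => /andP[].
  move=> w _; apply: leq_trans (leq_bigmax w); rewrite /deg /nbhd.
  by apply: subset_leq_card; apply/subsetP => v; rewrite !inE => /andP[].
have h3 : (prob_sel A q (fun X => [exists w in W, joins e X w]) <=
           prob_sel A q (killed e u))%R.
  apply: mu_mono => // X /existsP[w /andP[wW jw]]; apply/existsP; exists w.
  by rewrite jw andbT; rewrite inE in wW; case/andP: wW.
have h4 := @real_bound (maxdeg e) (deg_in e A u) HD hd.
rewrite cW in h2; rewrite /p_const; rewrite -/q in h4.
have := Rle_trans _ _ _ h4 (Rle_trans _ _ _ h2 h3); lra.
Qed.

Theorem lemma4 (T : finType) (e : rel T) (I S : {set T}) :
  simple_graph e ->
  (1 <= maxdeg e)%N ->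
  independent e I ->
  S \subset avail e I ->
  (forall u u', u \in S -> u' \in S -> u != u' -> dist_ge e 5 u u') ->
  (forall u, u \in S -> (INR (maxdeg e) / 2 <= INR (deg_in e (avail e I) u))%R) ->
  (prob_sel (avail e I) (/ (INR (maxdeg e) + 1))
     (fun X => S \subset avail e (next_indep e I X))
   <= p_const ^ #|S|)%R.
Proof.
move=> [sym irr] HD _ SA Hfar Hdeg.
set A := avail e I; set q := (/ (INR (maxdeg e) + 1))%R.
have Hq : (0 <= q <= 1)%R.
  have : (1 <= INR (maxdeg e))%R by apply: (le_INR 1); apply/leP.
  rewrite /q => h; split; first by left; apply: Rinv_0_lt_compat; lra.
  rewrite -Rinv_1; apply: Rinv_le_contravar; lra.
rewrite (@mu_ext _ q A _ (fun X => [forall u in S, ~~ killed e u X])); last first.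
  move=> X XA; apply/subsetP/forallP => [H u|H u uS].
    apply/implyP => uS; rewrite -(@event_eq _ e I X u XA); [exact: H | exact: (subsetP SA u uS)].
  rewrite (@event_eq _ e I X u XA) ?(subsetP SA u uS) //; exact: (implyP (H u)).
have Hone := @one_bound _ e A _ sym irr HD.
move: SA Hfar Hdeg; elim/set_ind': S => [|u S uS IH] SA Hfar Hdeg.
  rewrite (@mu_ext _ q A _ (fun X => true)) ?mu_true ?cards0 /=; first lra.
  by move=> X _; apply/forallP => x; rewrite inE.
rewrite (@mu_ext _ q A _ (fun X => ~~ killed e u X && [forall x in S, ~~ killed e x X])); last first.
  by move=> X _; rewrite forall_U1.
have uA : u \in A by apply: (subsetP SA); rewrite setU11.
rewrite (@mu_indep _ q (ball e 2 u)); first last.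
- move=> X; apply: eq_forallb => x; case xS: (x \in S) => //=; congr negb.
  have xu : u \notin ball e 4 x.
    apply: (Hfar x u); rewrite ?in_setU1 ?eqxx ?xS ?orbT //.
    by apply: contraNneq uS => <-.
  rewrite (@killed_loc _ e x X sym) [RHS](@killed_loc _ e x (X :&: ~: ball e 2 u) sym).
  congr killed; apply/setP => z; rewrite !in_setI in_setC.
  case zb: (z \in ball e 2 x); rewrite ?andbF ?andbT //.
  by rewrite (@ball_disj _ e x u z sym xu zb) andbT.
- by move=> X; rewrite (@killed_loc _ e u X sym).
rewrite cardsU1 uS add1n /=.
apply: Rmult_le_compat.
- exact: mu_ge0.
- exact: mu_ge0.
- apply: Hone => //; apply: Hdeg; exact: setU11.
apply: IH.
- by apply: subset_trans SA; apply: subsetUr.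
- move=> x y xS yS; apply: Hfar; by rewrite in_setU1 ?xS ?yS orbT.
- move=> x xS; apply: Hdeg; by rewrite in_setU1 xS orbT.
Qed.
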